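(* Fix $\boldsymbol{x}\in\mathcal{R}_r$ and consider the second-order cone program, in the variable $(\boldsymbol{u},d,t)\in\mathbb{R}^m\times\mathbb{R}\times\mathbb{R}$, $$\min\ t\quad\text{s.t.}\quad \Big\|E\begin{bmatrix}\boldsymbol{u}\\ d\end{bmatrix}\Big\|_2\le t,\qquad \hat{\dot V}(\boldsymbol{x},\boldsymbol{u})+m_r^V+\beta_r\sigma_r^V+\lambda V(\boldsymbol{x})\le d,\qquad \|A_r^h(\boldsymbol{x})\boldsymbol{u}+\boldsymbol{b}_r^h(\boldsymbol{x})\|_2\le \boldsymbol{c}_r^h(\boldsymbol{x})\boldsymbol{u}+d_r^h(\boldsymbol{x}),$$ with $E=\operatorname{diag}(1,\dots,1,\sqrt\rho)$. If the matrix $S_r^3(\boldsymbol{x})=A_r^h(\boldsymbol{x})^TA_r^h(\boldsymbol{x})-\boldsymbol{c}_r^h(\boldsymbol{x})^T\boldsymbol{c}_r^h(\boldsymbol{x})\in\mathbb{R}^{m\times m}$ is negative definite, then this program is feasible at $\boldsymbol{x}$.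
   Context: Setting: switching system $\dot{\boldsymbol{x}}=\sum_{r=1}^R\delta_r(f_r(\boldsymbol{x})+g_r(\boldsymbol{x})\boldsymbol{u})$, $\boldsymbol{x}\in\mathcal{X}\subset\mathbb{R}^n$, $\boldsymbol{u}\in\mathbb{R}^m$, with pairwise disjoint regions $\mathcal{R}_r$ covering $\mathcal{X}$ and $\delta_r$ the indicator of $\mathcal{R}_r$; nominal model $\dot{\boldsymbol{x}}=\hat f(\boldsymbol{x})+\hat g(\boldsymbol{x})\boldsymbol{u}$; continuously differentiable CLF $V$ and CBF $h$ with nominal derivative $\hat{\dot V}=L_{\hat f}V+L_{\hat g}V\boldsymbol{u}$; constants $\rho>0$, $\lambda>0$, $\beta_r>0$. Write $\boldsymbol{y}=[1,\boldsymbol{u}^T]^T$. For region $r$, Gaussian-process posteriors (zero prior mean, kernel $\boldsymbol{y}^T\operatorname{diag}(k_r^1(\boldsymbol{x},\boldsymbol{x}'),\dots,k_r^{m+1}(\boldsymbol{x},\boldsymbol{x}'))\boldsymbol{y}'$ with positive-definite base kernels, noise variance $\sigma_n^2>0$) give for the CLF residual a mean $m_r^V=\boldsymbol{\mu}_r^V(\boldsymbol{x})\boldsymbol{y}$ and standard deviation $\sigma_r^V=\sqrt{\boldsymbol{y}^T\Sigma_r^V(\boldsymbol{x})\boldsymbol{y}}$, and for the CBF residual a mean $\boldsymbol{\mu}_r^h(\boldsymbol{x})\boldsymbol{y}$ ($\boldsymbol{\mu}_r^h\in\mathbb{R}^{1\times(m+1)}$) and standard deviation $\sqrt{\boldsymbol{y}^T\Sigma_r^h(\boldsymbol{x})\boldsymbol{y}}$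 with posterior covariance matrix $\Sigma_r^h(\boldsymbol{x})=\Lambda_r(\boldsymbol{x},\boldsymbol{x})-\bar K_r(K_r+\sigma_n^2I)^{-1}\bar K_r^T$. Write $\mu_r^{h1}$ for the first entry and $\boldsymbol{\mu}_r^{hm}$ for the last $m$ entries of $\boldsymbol{\mu}_r^h$. Let $L_r$ satisfy $L_r^TL_r=\Sigma_r^h(\boldsymbol{x})$, with first column $\boldsymbol{l}_r^1$ and last $m$ columns $L_r^m$. Let $\boldsymbol{\varphi}_r^h=[L_{f_r}h-L_{\hat f}h,\ L_{g_r}h-L_{\hat g}h]\in\mathbb{R}^{1\times(m+1)}$ with first entry $\varphi_r^{hf}$ and last $m$ entries $\boldsymbol{\varphi}_r^{hg}$. Define $A_r^h=\beta_rL_r^m$, $\boldsymbol{b}_r^h=\beta_r\boldsymbol{l}_r^1$, $\boldsymbol{c}_r^h=\boldsymbol{\varphi}_r^{hg}+\boldsymbol{\mu}_r^{hm}$, $d_r^h=\varphi_r^{hf}+\mu_r^{h1}$. *)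

(* Defs.v *)
From mathcomp Require Import all_boot all_order all_algebra.
Set Implicit Arguments. Unset Strict Implicit. Unset Printing Implicit Defensive.
Import Order.TTheory GRing.Theory Num.Theory.
Local Open Scope ring_scope.

Section Defs.
Variable R : rcfType.

Definition norm2 (k : nat) (v : 'cV[R]_k) : R := Num.sqrt (\sum_i v i 0 ^+ 2).

Definition negdef (k : nat) (S : 'M[R]_k) : Prop :=
  forall v : 'cV[R]_k, v != 0 -> (v^T *m S *m v) 0 0 < 0.

Definition Emat (m : nat) (rho : R) : 'M[R]_(m + 1) :=
  block_mx (1%:M : 'M_m) 0 0 ((Num.sqrt rho)%:M : 'M_1).

Definition yvec (m : nat) (u : 'cV[R]_m) : 'cV[R]_(1 + m) :=
  col_mx (1%:M : 'M_1) u.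

Definition Lie (n k : nat) (grad : 'rV[R]_n) (F : 'M[R]_(n, k)) : 'M[R]_(1, k) :=
  grad *m F.

Definition phi_h (n m : nat) (gradh : 'rV[R]_n) (fr fhat : 'cV[R]_n)
  (gr ghat : 'M[R]_(n, m)) : 'rV[R]_(1 + m) :=
  row_mx (Lie gradh fr - Lie gradh fhat) (Lie gradh gr - Lie gradh ghat).

Definition A_h (m : nat) (beta : R) (L : 'M[R]_(1 + m)) : 'M[R]_(1 + m, m) :=
  beta *: rsubmx L.
Definition b_h (m : nat) (beta : R) (L : 'M[R]_(1 + m)) : 'cV[R]_(1 + m) :=
  beta *: lsubmx L.
Definition c_h (m : nat) (phi mu : 'rV[R]_(1 + m)) : 'rV[R]_m :=
  rsubmx phi + rsubmx mu.
Definition d_h (m : nat) (phi mu : 'rV[R]_(1 + m)) : R :=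
  (lsubmx phi) 0 0 + (lsubmx mu) 0 0.

Definition S3 (m : nat) (A : 'M[R]_(1 + m, m)) (c : 'rV[R]_m) : 'M[R]_m :=
  A^T *m A - c^T *m c.

Definition Vhatdot (n m : nat) (gradV : 'rV[R]_n) (fhat : 'cV[R]_n)
  (ghat : 'M[R]_(n, m)) (u : 'cV[R]_m) : R :=
  (Lie gradV fhat) 0 0 + (Lie gradV ghat *m u) 0 0.

(* GP mean and standard deviation of the CLF residual *)
Definition mV (m : nat) (mu : 'rV[R]_(1 + m)) (u : 'cV[R]_m) : R :=
  (mu *m yvec u) 0 0.
Definition sigV (m : nat) (Sig : 'M[R]_(1 + m)) (u : 'cV[R]_m) : R :=
  Num.sqrt (((yvec u)^T *m Sig *m yvec u) 0 0).

Definition socp_feasible (n m : nat) (rho lambda beta : R) (Vx : R)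
  (gradV : 'rV[R]_n) (fhat : 'cV[R]_n) (ghat : 'M[R]_(n, m))
  (muV : 'rV[R]_(1 + m)) (SigV : 'M[R]_(1 + m))
  (A : 'M[R]_(1 + m, m)) (b : 'cV[R]_(1 + m)) (c : 'rV[R]_m) (d : R) : Prop :=
  exists (u : 'cV[R]_m) (dd t : R),
    [/\ norm2 (Emat m rho *m col_mx u (dd%:M : 'M_1)) <= t,
        Vhatdot gradV fhat ghat u + mV muV u + beta * sigV SigV u + lambda * Vx
          <= dd
      & norm2 (A *m u + b) <= (c *m u) 0 0 + d].

End Defs.

(* Main.v *)
Require Import Defs.
From mathcomp Require Import all_boot all_order all_algebra ring lra.
Import Order.TTheory GRing.Theory Num.Theory.
Local Open Scope ring_scope.

Lemma core (R: rcfType) m p (A : 'M[R]_(p,m)) (b : 'cV[R]_p) (c : 'rV[R]_m) (d:R) (w : 'cV[R]_m) :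
 0 < (c*m w) 0 0 -> \sum_i (A *m w) i 0 ^+2 < ((c *m w) 0 0)^+2 ->
 exists u, norm2 (A *m u + b) <= (c *m u) 0 0 + d.
Proof.
set k := (c*m w) 0 0; set a := \sum_i _; move=> k0 ak.
set B := \sum_i (A*m w) i 0 * b i 0; set b2 := \sum_i b i 0 ^+2.
set del := k^+2 - a.
have del0: 0 < del by rewrite subr_gt0.
have b20 : 0 <= b2 by apply: sumr_ge0 => i _; exact: sqr_ge0.
set X := 2 * `|d*k - B| + b2.
have X0 : 0 <= X by rewrite addr_ge0 // mulr_ge0.
set s := 1 + X/del + `|d|/k.
have hs1 : 1 <= s.
  rewrite /s -addrA lerDl addr_ge0 // divr_ge0 //; exact: ltW.
have hsd : X <= s * del.
  rewrite /s mulrDl mulrDl [X / del * del]divfK ?gt_eqF //.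
  have : 0 <= `|d| / k * del by rewrite !mulr_ge0 // ?invr_ge0 ltW.
  lra.
have hsk : `|d| <= s * k.
  rewrite /s mulrDl mulrDl [`|d| / k * k]divfK ?gt_eqF //.
  have : 0 <= X / del * k by rewrite !mulr_ge0 // ?invr_ge0 ltW.
  lra.
exists (s *: w).
have e1 : (c *m (s*:w)) 0 0 = s * k by rewrite -scalemxAr mxE.
have e2 : \sum_i (A *m (s*:w) + b) i 0 ^+2 = s^+2 * a + 2 * s * B + b2.
  transitivity (\sum_i (s^+2 * (A*m w) i 0 ^+2 + 2*s*((A*m w) i 0 * b i 0) + b i 0 ^+2)).
    by apply: eq_bigr => i _; rewrite -scalemxAr !mxE; ring.
  by rewrite !big_split /= -!mulr_sumr.
rewrite /norm2 e1 e2.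
have p0 : 0 <= s*k + d.
  have := ler_norm (- d); rewrite normrN; lra.
have hB1 := ler_norm (d*k - B).
have hB2 : - (d*k-B) <= `|d*k - B| by rewrite -normrN ler_norm.
have h3 : s * X <= s * (s * del) by rewrite ler_wpM2l // ; lra.
have h4 : b2 <= s * b2 by rewrite -{1}(mul1r b2) ler_wpM2r.
have h5 : s * (-(d*k-B)) <= s * `|d*k - B| by rewrite ler_wpM2l //; lra.
have q : s^+2*a + 2*s*B + b2 <= (s*k+d)^+2.
  rewrite /X /del in h3. nra.
by rewrite -(ger0_norm p0) -sqrtr_sqr ler_wsqrtr.
Qed.

Lemma quad (R: rcfType) m p (A : 'M[R]_(p,m)) (c : 'rV[R]_m) (v : 'cV[R]_m) :
  (v^T *m (A^T *m A - c^T *m c) *m v) 0 0 = \sum_i (A *m v) i 0 ^+2 - ((c *m v) 0 0)^+2.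
Proof.
rewrite mulmxBr mulmxBl !mulmxA -!trmx_mul -!mulmxA !mxE big_ord1 !mxE.
by congr (_ - _); apply: eq_bigr => i _; rewrite !mxE.
Qed.

Lemma core2 (R: rcfType) m (A : 'M[R]_(1 + m,m)) (b : 'cV[R]_(1 + m)) (c : 'rV[R]_m) (d:R) :
  (0 < m)%N -> negdef (S3 A c) ->
 exists u, norm2 (A *m u + b) <= (c *m u) 0 0 + d.
Proof.
move=> m0 nd.
have v0 : (const_mx 1 : 'cV[R]_m) != 0.
  apply/negP => /eqP /matrixP /(_ (Ordinal m0) 0); rewrite !mxE => /eqP.
  by rewrite oner_eq0.
have := nd _ v0; rewrite /S3 quad subr_lt0.
set v := const_mx 1; set k := (c *m v) 0 0 => H.
have a0 : 0 <= \sum_i (A *m v) i 0 ^+2 by apply: sumr_ge0 => i _; exact: sqr_ge0.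
have [kp|kn|k0] := ltgtP k 0.
- have e1 : (c *m - v) 0 0 = - k by rewrite mulmxN mxE.
  have e2 : \sum_i (A *m - v) i 0 ^+2 = \sum_i (A *m v) i 0 ^+2.
    by apply: eq_bigr => i _; rewrite mulmxN mxE sqrrN.
  apply: (@core _ _ _ A b c d (- v)); rewrite ?e1 ?e2 ?sqrrN //.
  by rewrite oppr_gt0.
- exact: (@core _ _ _ A b c d v).
- move: H; rewrite -/k k0 expr0n /=; lra.
Qed.

Theorem corollary3 (R : rcfType) (n m NR : nat)
  (Reg : 'I_NR -> 'cV[R]_n -> Prop)
  (f : 'I_NR -> 'cV[R]_n -> 'cV[R]_n) (g : 'I_NR -> 'cV[R]_n -> 'M[R]_(n, m))
  (fhat : 'cV[R]_n -> 'cV[R]_n) (ghat : 'cV[R]_n -> 'M[R]_(n, m))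
  (V h : 'cV[R]_n -> R) (gradV gradh : 'cV[R]_n -> 'rV[R]_n)
  (muV muh : 'I_NR -> 'cV[R]_n -> 'rV[R]_(1 + m))
  (SigV Sigh : 'I_NR -> 'cV[R]_n -> 'M[R]_(1 + m))
  (L : 'I_NR -> 'cV[R]_n -> 'M[R]_(1 + m))
  (rho lambda : R) (beta : 'I_NR -> R)
  (r : 'I_NR) (x : 'cV[R]_n) :
  (0 < m)%N ->
  0 < rho -> 0 < lambda -> (forall r', 0 < beta r') ->
  (forall r' x' (y : 'cV[R]_(1 + m)), 0 <= (y^T *m SigV r' x' *m y) 0 0) ->
  (forall r' x', (L r' x')^T *m L r' x' = Sigh r' x') ->
  Reg r x ->
  let phi := phi_h (gradh x) (f r x) (fhat x) (g r x) (ghat x) in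
  let A := A_h (beta r) (L r x) in
  let b := b_h (beta r) (L r x) in
  let c := c_h phi (muh r x) in
  let d := d_h phi (muh r x) in
  negdef (S3 A c) ->
  socp_feasible rho lambda (beta r) (V x) (gradV x) (fhat x) (ghat x)
    (muV r x) (SigV r x) A b c d.
Proof.
move=> m0 _ _ _ _ _ _ phi A b c d nd.
have [u Hu] := @core2 _ _ A b c d m0 nd.
exists u.
exists (Vhatdot (gradV x) (fhat x) (ghat x) u + mV (muV r x) u
        + beta r * sigV (SigV r x) u + lambda * V x).
exists (norm2 (Emat m rho *m col_mx u ((Vhatdot (gradV x) (fhat x) (ghat x) u + mV (muV r x) u
        + beta r * sigV (SigV r x) u + lambda * V x)%:M : 'M_1))).
by split.
Qed.
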